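(* Let $h=u+v+u^{-1}+v^{-1}+u^{-1}v^{-1}\in A=\mathbb C\langle u^{\pm1},v^{\pm1}\rangle$ and consider the derivation $\frac{d}{dt}x=\{h,x\}_K$ of $A$ (the Kontsevich flow). For every integer $k>0$, $\pi(h^k)$ is an integral of this flow: $\frac{d}{dt}h^k=\{h,h^k\}_K\in[A,A]$, i.e. $\pi\big(\tfrac{d}{dt}h^k\big)=0$.
   Context: $A$ is the group algebra over $\mathbb C$ of the free group on $u,v$; $[A,A]$ is the linear span of all $ab-ba$; $\pi:A\to A/[A,A]$ is the projection. $\mu(a\otimes b)=ab$; $A\otimes A$ has componentwise multiplication. The double bracket $\llbracket\cdot\rrbracket_K:A\otimes A\to A\otimes A$ is the linear map with $\llbracket u\otimes v\rrbracket_K=-vu\otimes1$, $\llbracket v\otimes u\rrbracket_K=uv\otimes1$, $\llbracket u\otimes u\rrbracket_K=\llbracket v\otimes v\rrbracket_K=0$, extended (also to inverse letters) by the Leibniz rules $\llbracket a\otimes bc\rrbracket_K=\llbracket a\otimes b\rrbracket_K(1\otimes c)+(b\otimes1)\llbracket a\otimes c\rrbracket_K$ and $\llbracket ab\otimes c\rrbracket_K=\llbracket a\otimes c\rrbracket_K(b\otimes1)+(1\otimes a)\llbracket b\otimes c\rrbracket_K$. The bracket is $\{a,b\}_K=\mu(\llbracket a\otimes b\rrbracket_K)$; it satisfies the Leibniz rule in the second argument, so $\{h,\cdot\}_K$ is a derivation of $A$. *)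

(* Defs.v *)
From HB Require Import structures.
From mathcomp Require Import all_boot all_algebra.
From mathcomp Require Import complex Rstruct.
Set Implicit Arguments. Unset Strict Implicit. Unset Printing Implicit Defensive.
Import GRing.Theory.
Local Open Scope ring_scope.

Definition CC : comNzRingType := complex Rdefinitions.R.

(* a letter is (g, e): g = false for u, true for v; e = true means inverse *)
Definition letter := (bool * bool)%type.
Definition linv (x : letter) : letter := (x.1, ~~ x.2).

Fixpoint reducedb (w : seq letter) : bool :=
  match w with
  | x :: ((y :: _) as t) => (y != linv x) && reducedb t
  | _ => true
  end.

Definition cons_red (x : letter) (w : seq letter) : seq letter :=
  match w with
  | y :: t => if y == linv x then t else x :: w
  | [::] => [:: x]
  end.

Definition reduce (w : seq letter) : seq letter := foldr cons_red [::] w.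

Lemma reduced_cons_red x w : reducedb w -> reducedb (cons_red x w).
Proof.
case: w => [|y t] //=; case: ifP => [_|/negbT ne] Hr.
  by case: t Hr => [|z t'] //= /andP[].
by rewrite /= ne Hr.
Qed.

Lemma reduced_reduce w : reducedb (reduce w).
Proof. by elim: w => [|x w IH] //=; apply: reduced_cons_red. Qed.

Record FG := MkFG { fgw : seq letter; fgP : reducedb fgw }.
HB.instance Definition _ := [isSub for fgw].
HB.instance Definition _ := [Equality of FG by <:].

Definition FGred (w : seq letter) : FG := MkFG (reduced_reduce w).
Definition fone : FG := FGred [::].
Definition fmul (g h : FG) : FG := FGred (fgw g ++ fgw h).
Definition finv (g : FG) : FG := FGred (rev (map linv (fgw g))).
Definition fu : FG := FGred [:: (false, false)].
Definition fv : FG := FGred [:: (true, false)].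

(** * The group algebra A = C[F]
    An element is represented by a finite formal linear combination
    (a list of (coefficient, group element)); two representations denote
    the same element of A iff all their coefficients agree (eqA). *)
Definition A := seq (CC * FG).
Definition coefA (x : A) (g : FG) : CC := \sum_(p <- x | p.2 == g) p.1.
Definition eqA (x y : A) : Prop := forall g, coefA x g = coefA y g.

Definition oneA : A := [:: (1, fone)].
Definition ofG (g : FG) : A := [:: (1, g)].
Definition addA (x y : A) : A := x ++ y.
Definition scaleA (c : CC) (x : A) : A := [seq (c * p.1, p.2) | p <- x].
Definition subA (x y : A) : A := x ++ scaleA (-1) y.
Definition mulA (x y : A) : A := [seq (p.1 * q.1, fmul p.2 q.2) | p <- x, q <- y].
Definition powA (x : A) (k : nat) : A := iter k (mulA x) oneA.

(** * A (x) A = C[F x F], with componentwise multiplication *)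
Definition AA := seq (CC * (FG * FG)).
Definition coefAA (t : AA) (g : FG * FG) : CC := \sum_(p <- t | p.2 == g) p.1.
Definition eqAA (s t : AA) : Prop := forall g, coefAA s g = coefAA t g.

Definition tens (g h : FG) : AA := [:: (1, (g, h))].
Definition zeroAA : AA := [::].
Definition addAA (s t : AA) : AA := s ++ t.
Definition scaleAA (c : CC) (t : AA) : AA := [seq (c * p.1, p.2) | p <- t].
Definition mulAA (s t : AA) : AA :=
  [seq (p.1 * q.1, (fmul p.2.1 q.2.1, fmul p.2.2 q.2.2)) | p <- s, q <- t].

Definition muAA (t : AA) : A := [seq (p.1, fmul p.2.1 p.2.2) | p <- t].

(** * The Kontsevich double bracket.
    A linear map A (x) A -> A (x) A is determined by its values D g h on the
    basis g (x) h (g, h in F).  The defining properties: *)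
Definition is_Kontsevich_dbr (D : FG -> FG -> AA) : Prop :=
  [/\ eqAA (D fu fv) (scaleAA (-1) (tens (fmul fv fu) fone)),
      eqAA (D fv fu) (tens (fmul fu fv) fone),
      eqAA (D fu fu) zeroAA,
      eqAA (D fv fv) zeroAA
    &
      (forall a b c : FG, eqAA (D a (fmul b c))
          (addAA (mulAA (D a b) (tens fone c)) (mulAA (tens b fone) (D a c))))
      /\
      (forall a b c : FG, eqAA (D (fmul a b) c)
          (addAA (mulAA (D a c) (tens b fone)) (mulAA (tens fone a) (D b c))))].

(* the bilinear extension of [[.]] to A x A, followed by mu: {x, y}_K *)
Definition brK (D : FG -> FG -> AA) (x y : A) : A :=
  flatten [seq scaleA (p.1 * q.1) (muAA (D p.2 q.2)) | p <- x, q <- y].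

(** * [A, A] : the linear span of all ab - ba;  x \in [A,A] iff pi x = 0 *)
Definition in_commA (x : A) : Prop :=
  exists s : seq (CC * A * A),
    eqA x (flatten [seq scaleA t.1.1 (subA (mulA t.1.2 t.2) (mulA t.2 t.1.2)) | t <- s]).

Definition hK : A :=
  [:: (1, fu); (1, fv); (1, finv fu); (1, finv fv); (1, fmul (finv fu) (finv fv))].

(* Main.v *)
Require Import Defs.
From HB Require Import structures.
From mathcomp Require Import all_boot all_algebra.
Set Implicit Arguments. Unset Strict Implicit. Unset Printing Implicit Defensive.
Import GRing.Theory.
Local Open Scope ring_scope.
Local Notation mulA := Defs.mulA.
Local Notation addA := Defs.addA.
Local Notation subA := Defs.subA.
Local Notation finv := Defs.finv.

Lemma linvK x : linv (linv x) = x.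
Proof. by case: x => a b; rewrite /linv /= negbK. Qed.

Lemma reduce_id w : reducedb w -> reduce w = w.
Proof.
elim: w => [|x w IH] //= Hr.
have Hw : reducedb w by case: w Hr {IH} => [|y t] //= /andP[].
rewrite IH //; case: w Hr {IH Hw} => [|y t] //= /andP[ne _].
by rewrite (negbTE ne).
Qed.

Lemma reduced_foldr r a : reducedb r -> reducedb (foldr cons_red r a).
Proof. by move=> Hr; elim: a => [|x a IH] //=; apply: reduced_cons_red. Qed.

Lemma cons_red_cancel x s : reducedb s -> cons_red x (cons_red (linv x) s) = s.
Proof.
case: s => [|z s] /=; first by rewrite eqxx.
case: ifP => [/eqP ez|nz] Hr.
  have -> : z = x by rewrite ez linvK.
  case: s Hr => [|w s] //= /andP[ne _].
  by rewrite ez linvK in ne; rewrite (negbTE ne).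
by rewrite /= eqxx.
Qed.

Lemma foldr_cons_red r x t : reducedb r -> reducedb t ->
  foldr cons_red r (cons_red x t) = cons_red x (foldr cons_red r t).
Proof.
move=> Hr; case: t => [|y t] //= Ht.
case: ifP => [/eqP ey|_] //=.
have Ht' : reducedb t by case: t Ht => [|z t] //= /andP[].
by rewrite ey cons_red_cancel //; apply: reduced_foldr.
Qed.

Lemma foldr_reduce r a : reducedb r -> foldr cons_red r (reduce a) = foldr cons_red r a.
Proof.
move=> Hr; elim: a => [|x a IH] //=.
by rewrite foldr_cons_red // ?reduced_reduce // IH.
Qed.

Lemma reduce_cat a b : reduce (a ++ b) = foldr cons_red (reduce b) a.
Proof. by rewrite /reduce foldr_cat. Qed.

Lemma reduce_catl a b : reduce (reduce a ++ b) = reduce (a ++ b).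
Proof. by rewrite !reduce_cat foldr_reduce // reduced_reduce. Qed.

Lemma reduce_catr a b : reduce (a ++ reduce b) = reduce (a ++ b).
Proof. by rewrite !reduce_cat reduce_id // reduced_reduce. Qed.

Lemma fmulA : associative fmul.
Proof.
move=> g h k; apply: val_inj => /=.
by rewrite reduce_catl reduce_catr catA.
Qed.

Lemma fmul1g g : fmul fone g = g.
Proof. by apply: val_inj => /=; rewrite reduce_id // fgP. Qed.

Lemma fmulg1 g : fmul g fone = g.
Proof. by apply: val_inj => /=; rewrite cats0 reduce_id // fgP. Qed.

Section Lin.
Variable T : eqType.
Definition coefL (x : seq (CC * T)) (g : T) : CC := \sum_(p <- x | p.2 == g) p.1.
Definition ev (phi : T -> CC) (x : seq (CC * T)) : CC := \sum_(p <- x) p.1 * phi p.2.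

Lemma coefL_ev x g : coefL x g = ev (fun t => (t == g)%:R) x.
Proof.
rewrite /coefL /ev big_mkcond; apply: eq_bigr => p _.
by case: eqP => _; rewrite ?mulr1 ?mulr0.
Qed.

Lemma ev_support r x phi : uniq r -> {subset map snd x <= r} ->
  ev phi x = \sum_(t <- r) coefL x t * phi t.
Proof.
move=> ur sub.
transitivity (\sum_(t <- r) \sum_(p <- x) (p.2 == t)%:R * (p.1 * phi p.2)).
  rewrite exchange_big /ev big_seq [RHS]big_seq; apply: eq_bigr => p px.
  have mp : p.2 \in r by apply: sub; apply: map_f.
  rewrite (big_rem _ mp) /= eqxx mul1r.
  have H0 : \sum_(i <- rem p.2 r) (p.2 == i)%:R * (p.1 * phi p.2) = 0.
    apply: big1_seq => t /andP[_ tr].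
    have -> : (p.2 == t) = false.
      by apply/negbTE/eqP => e; move: tr; rewrite -e mem_rem_uniqF.
    by rewrite mul0r.
  by rewrite H0 addr0.
apply: eq_bigr => t _; rewrite /coefL big_distrl [RHS]big_mkcond.
by apply: eq_bigr => p _; case: eqP => [->|_]; rewrite ?mul1r ?mul0r.
Qed.

Lemma ev_eq x y phi : (forall g, coefL x g = coefL y g) -> ev phi x = ev phi y.
Proof.
move=> e; set r := undup (map snd x ++ map snd y).
have ur : uniq r by apply: undup_uniq.
rewrite (ev_support (r := r)) // ?(ev_support (r := r) (x := y)) //.
  by apply: eq_bigr => t _; rewrite e.
by move=> t ty; rewrite mem_undup mem_cat ty orbT.
by move=> t tx; rewrite mem_undup mem_cat tx.
Qed.

Lemma ev_cat phi x y : ev phi (x ++ y) = ev phi x + ev phi y.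
Proof. by rewrite /ev big_cat. Qed.

Lemma ev_nil phi : ev phi [::] = 0.
Proof. by rewrite /ev big_nil. Qed.

Lemma ev_scale phi c x : ev phi [seq (c * p.1, p.2) | p <- x] = c * ev phi x.
Proof. by rewrite /ev big_map big_distrr; apply: eq_bigr => p _ /=; rewrite mulrA. Qed.

Lemma ev_ext phi psi x : phi =1 psi -> ev phi x = ev psi x.
Proof. by move=> e; apply: eq_bigr => p _; rewrite e. Qed.

End Lin.

Lemma ev_map (T U : eqType) phi (f : T -> U) (x : seq (CC * T)) :
  ev phi [seq (p.1, f p.2) | p <- x] = ev (fun t => phi (f t)) x.
Proof. by rewrite /ev big_map. Qed.

Lemma ev_flatten (T U : eqType) phi (F : CC * T -> seq (CC * U)) x :
  ev phi (flatten [seq F p | p <- x]) = \sum_(p <- x) ev phi (F p).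
Proof. by rewrite /ev big_flatten big_map. Qed.

Lemma ev_allpairs (T1 T2 U : eqType) phi (f : T1 -> T2 -> U) x y :
  ev phi [seq (p.1 * q.1, f p.2 q.2) | p <- x, q <- y] =
  ev (fun a => ev (fun b => phi (f a b)) y) x.
Proof.
rewrite /ev big_allpairs_dep; apply: eq_bigr => p _.
by rewrite big_distrr; apply: eq_bigr => q _ /=; rewrite mulrA.
Qed.

Lemma ev_allpairs_flat (T1 T2 U : eqType) phi (F : CC * T1 -> CC * T2 -> seq (CC * U)) x y :
  ev phi (flatten [seq F p q | p <- x, q <- y]) =
  \sum_(p <- x) \sum_(q <- y) ev phi (F p q).
Proof.
rewrite /ev big_flatten big_allpairs_dep; apply: eq_bigr => p _; done.
Qed.

Lemma ev_add (T : eqType) (phi psi : T -> CC) x :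
  ev (fun t => phi t + psi t) x = ev phi x + ev psi x.
Proof. by rewrite /ev -big_split; apply: eq_bigr => p _; rewrite mulrDr. Qed.

Lemma ev_swap (T1 T2 : eqType) (F : T1 -> T2 -> CC) x y :
  ev (fun a => ev (fun b => F a b) y) x = ev (fun b => ev (fun a => F a b) x) y.
Proof.
rewrite /ev.
under eq_bigr => p _ do rewrite big_distrr.
rewrite exchange_big; apply: eq_bigr => q _; rewrite big_distrr.
by apply: eq_bigr => p _; exact: mulrCA.
Qed.

Definition evm (phi : FG -> CC) (t : AA) := ev (fun ab => phi (fmul ab.1 ab.2)) t.

Lemma coefA_ev x g : coefA x g = ev (fun t => (t == g)%:R) x.
Proof. exact: coefL_ev. Qed.

Lemma coefAA_ev x g : coefAA x g = ev (fun t => (t == g)%:R) x.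
Proof. exact: coefL_ev. Qed.

Lemma evA_eq phi x y : eqA x y -> ev phi x = ev phi y.
Proof. by move=> e; apply: ev_eq => g; apply: e. Qed.

Lemma evAA_eq (phi : FG * FG -> CC) x y : eqAA x y -> ev phi x = ev phi y.
Proof. by move=> e; apply: ev_eq => g; apply: e. Qed.

Lemma ev_mulA phi x y :
  ev phi (mulA x y) = ev (fun a => ev (fun b => phi (fmul a b)) y) x.
Proof. exact: ev_allpairs. Qed.

Lemma ev_mulAA (phi : FG * FG -> CC) s t :
  ev phi (mulAA s t) =
  ev (fun a => ev (fun b => phi (fmul a.1 b.1, fmul a.2 b.2)) t) s.
Proof. exact: (ev_allpairs phi (fun a b => (fmul a.1 b.1, fmul a.2 b.2))). Qed.

Lemma ev_muAA phi t : ev phi (muAA t) = evm phi t.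
Proof. exact: (ev_map phi (fun ab => fmul ab.1 ab.2)). Qed.

Lemma ev_scaleA phi c x : ev phi (scaleA c x) = c * ev phi x.
Proof. exact: ev_scale. Qed.

Lemma ev_scaleAA (phi : FG * FG -> CC) c x : ev phi (scaleAA c x) = c * ev phi x.
Proof. exact: ev_scale. Qed.

Lemma ev_cons (T : eqType) phi (p : CC * T) x : ev phi (p :: x) = p.1 * phi p.2 + ev phi x.
Proof. by rewrite /ev big_cons. Qed.

Lemma ev_brK phi D x y :
  ev phi (brK D x y) = ev (fun a => ev (fun b => evm phi (D a b)) y) x.
Proof.
rewrite /brK ev_allpairs_flat /ev; apply: eq_bigr => p _.
rewrite big_distrr; apply: eq_bigr => q _.
transitivity (ev phi (scaleA (p.1*q.1) (muAA (D p.2 q.2)))); first by [].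
by rewrite ev_scaleA ev_muAA /= mulrA.
Qed.

Lemma ev_tens (phi : FG * FG -> CC) g h : ev phi (tens g h) = phi (g, h).
Proof. by rewrite /tens ev_cons ev_nil addr0 mul1r. Qed.

Section WithD.
Variable D : FG -> FG -> AA.
Hypothesis HD : is_Kontsevich_dbr D.

Lemma evm_leib2 phi a b c :
  evm phi (D a (fmul b c)) =
  evm (fun w => phi (fmul w c)) (D a b) + evm (fun w => phi (fmul b w)) (D a c).
Proof.
case: HD => _ _ _ _ [L2 _].
rewrite /evm (evAA_eq _ (L2 a b c)) ev_cat !ev_mulAA.
congr (_ + _).
  by apply: ev_ext => w; rewrite ev_tens /= fmulg1 fmulA.
by rewrite ev_tens; apply: ev_ext => w /=; rewrite fmul1g fmulA.
Qed.

Lemma ev_brK_der phi x y z :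
  ev phi (brK D x (mulA y z)) =
  ev phi (mulA (brK D x y) z) + ev phi (mulA y (brK D x z)).
Proof.
rewrite ev_brK !ev_mulA ev_brK.
under ev_ext => a do rewrite ev_mulA.
have E2 : ev (fun a => ev (fun b => phi (fmul a b)) (brK D x z)) y =
  ev (fun b => ev (fun a => ev (fun c => evm (fun w => phi (fmul b w)) (D a c)) z) x) y.
  by apply: ev_ext => b; rewrite ev_brK.
rewrite E2.
under ev_ext => a do under ev_ext => b do under ev_ext => c do rewrite evm_leib2.
under ev_ext => a do under ev_ext => b do rewrite ev_add.
under ev_ext => a do rewrite ev_add.
rewrite ev_add; congr (_ + _).
  apply: ev_ext => a; apply: ev_ext => b; rewrite /evm; exact: ev_swap.
by rewrite ev_swap.
Qed.
End WithD.

Lemma ev_opp (T : eqType) (phi : T -> CC) x : ev (fun t => - phi t) x = - ev phi x.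
Proof. by rewrite /ev -sumrN; apply: eq_bigr => p _; rewrite mulrN. Qed.

Lemma ev_subf (T : eqType) (phi psi : T -> CC) x :
  ev (fun t => phi t - psi t) x = ev phi x - ev psi x.
Proof. by rewrite ev_add ev_opp. Qed.

Lemma ev_subA phi x y : ev phi (subA x y) = ev phi x - ev phi y.
Proof. by rewrite /subA ev_cat ev_scaleA mulN1r. Qed.

Lemma ev_mulA3l phi x y z : ev phi (mulA (mulA x y) z) =
  ev (fun a => ev (fun b => ev (fun c => phi (fmul a (fmul b c))) z) y) x.
Proof.
rewrite ev_mulA ev_mulA; apply: ev_ext => a.
by apply: ev_ext => b; apply: ev_ext => c; rewrite fmulA.
Qed.

Lemma ev_mulA3r phi x y z : ev phi (mulA x (mulA y z)) =
  ev (fun a => ev (fun b => ev (fun c => phi (fmul a (fmul b c))) z) y) x.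
Proof. by rewrite ev_mulA; apply: ev_ext => a; rewrite ev_mulA. Qed.

Definition SK : A := [:: (1, fv); (1, finv fu)].



Definition embR (T : eqType) (l : seq (int * T)) : seq (CC * T) :=
  [seq ((p.1)%:~R, p.2) | p <- l].

Lemma ev_embR (T : eqType) phi (l : seq (int * T)) :
  ev phi (embR l) = \sum_(p <- l) (p.1)%:~R * phi p.2.
Proof. by rewrite /ev big_map. Qed.

Lemma ev_embR_cat (T : eqType) phi (l1 l2 : seq (int * T)) :
  ev phi (embR (l1 ++ l2)) = ev phi (embR l1) + ev phi (embR l2).
Proof. by rewrite /embR map_cat ev_cat. Qed.

Lemma ev_embR_map (T U : eqType) phi (f : T -> U) (l : seq (int * T)) :
  ev phi (embR [seq (p.1, f p.2) | p <- l]) = ev (fun t => phi (f t)) (embR l).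
Proof. by rewrite !ev_embR big_map. Qed.

Lemma ev_embR_mapN (T U : eqType) phi (f : T -> U) (l : seq (int * T)) :
  ev phi (embR [seq (- p.1, f p.2) | p <- l]) = - ev (fun t => phi (f t)) (embR l).
Proof.
rewrite !ev_embR big_map -sumrN; apply: eq_bigr => p _.
by rewrite /= rmorphN mulNr.
Qed.

Definition gen (i : nat) : FG :=
  match i with
  | 0 => fu | 1 => fv | 2 => finv fu | 3 => finv fv | _ => fmul (finv fu) (finv fv)
  end.

Lemma fmul_uU : fmul fu (finv fu) = fone. Proof. by apply: val_inj. Qed.
Lemma fmul_Uu : fmul (finv fu) fu = fone. Proof. by apply: val_inj. Qed.
Lemma fmul_vV : fmul fv (finv fv) = fone. Proof. by apply: val_inj. Qed.
Lemma fmul_Vv : fmul (finv fv) fv = fone. Proof. by apply: val_inj. Qed.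

Definition invS (Y : FG) (l : seq (int * (FG * FG))) :=
  [seq (- p.1, (fmul Y p.2.1, fmul p.2.2 Y)) | p <- l].
Definition invF (X : FG) (l : seq (int * (FG * FG))) :=
  [seq (- p.1, (fmul p.2.1 X, fmul X p.2.2)) | p <- l].
Definition leib2 (b c : FG) (l1 l2 : seq (int * (FG * FG))) :=
  [seq (p.1, (p.2.1, fmul p.2.2 c)) | p <- l1] ++ [seq (p.1, (fmul b p.2.1, p.2.2)) | p <- l2].
Definition leib1 (a b : FG) (l1 l2 : seq (int * (FG * FG))) :=
  [seq (p.1, (fmul p.2.1 b, p.2.2)) | p <- l1] ++ [seq (p.1, (p.2.1, fmul a p.2.2)) | p <- l2].

Definition d00 : seq (int * (FG * FG)) := [::].
Definition d01 : seq (int * (FG * FG)) := [:: (-1, (fmul fv fu, fone))].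
Definition d10 : seq (int * (FG * FG)) := [:: (1, (fmul fu fv, fone))].
Definition d11 : seq (int * (FG * FG)) := [::].
Definition d02 := invS (finv fu) d00.
Definition d03 := invS (finv fv) d01.
Definition d12 := invS (finv fu) d10.
Definition d13 := invS (finv fv) d11.
Definition d20 := invF (finv fu) d00.
Definition d21 := invF (finv fu) d01.
Definition d30 := invF (finv fv) d10.
Definition d31 := invF (finv fv) d11.
Definition d22 := invS (finv fu) d20.
Definition d23 := invS (finv fv) d21.
Definition d32 := invS (finv fu) d30.
Definition d33 := invS (finv fv) d31.
Definition d04 := leib2 (finv fu) (finv fv) d02 d03.
Definition d14 := leib2 (finv fu) (finv fv) d12 d13.
Definition d24 := leib2 (finv fu) (finv fv) d22 d23.
Definition d34 := leib2 (finv fu) (finv fv) d32 d33.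
Definition d40 := leib1 (finv fu) (finv fv) d20 d30.
Definition d41 := leib1 (finv fu) (finv fv) d21 d31.
Definition d42 := leib1 (finv fu) (finv fv) d22 d32.
Definition d43 := leib1 (finv fu) (finv fv) d23 d33.
Definition d44 := leib1 (finv fu) (finv fv) d24 d34.

Definition Dl (i j : nat) : seq (int * (FG * FG)) :=
  match i, j with
  | 0, 0 => d00 | 0, 1 => d01 | 0, 2 => d02 | 0, 3 => d03 | 0, _ => d04
  | 1, 0 => d10 | 1, 1 => d11 | 1, 2 => d12 | 1, 3 => d13 | 1, _ => d14
  | 2, 0 => d20 | 2, 1 => d21 | 2, 2 => d22 | 2, 3 => d23 | 2, _ => d24
  | 3, 0 => d30 | 3, 1 => d31 | 3, 2 => d32 | 3, 3 => d33 | 3, _ => d34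
  | _, 0 => d40 | _, 1 => d41 | _, 2 => d42 | _, 3 => d43 | _, _ => d44
  end.

Section WithD.
Variable D : FG -> FG -> AA.
Hypothesis HD : is_Kontsevich_dbr D.

Definition DV a b (l : seq (int * (FG * FG))) :=
  forall psi : FG * FG -> CC, ev psi (D a b) = ev psi (embR l).

Lemma evL2 psi a b c : ev psi (D a (fmul b c)) =
  ev (fun w => psi (w.1, fmul w.2 c)) (D a b) + ev (fun w => psi (fmul b w.1, w.2)) (D a c).
Proof.
case: HD => _ _ _ _ [L2 _].
rewrite (evAA_eq _ (L2 a b c)) ev_cat !ev_mulAA.
congr (_ + _).
  by apply: ev_ext => w; rewrite ev_tens /= fmulg1.
by rewrite ev_tens; apply: ev_ext => w /=; rewrite fmul1g.
Qed.

Lemma evL1 psi a b c : ev psi (D (fmul a b) c) =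
  ev (fun w => psi (fmul w.1 b, w.2)) (D a c) + ev (fun w => psi (w.1, fmul a w.2)) (D b c).
Proof.
case: HD => _ _ _ _ [_ L1].
rewrite (evAA_eq _ (L1 a b c)) ev_cat !ev_mulAA.
congr (_ + _).
  by apply: ev_ext => w; rewrite ev_tens /= fmulg1.
by rewrite ev_tens; apply: ev_ext => w /=; rewrite fmul1g.
Qed.

Lemma D1r psi a : ev psi (D a fone) = 0.
Proof.
have := evL2 psi a fone fone; rewrite fmul1g.
have E1 : ev (fun w => psi (w.1, fmul w.2 fone)) (D a fone) = ev psi (D a fone).
  by apply: ev_ext => w; rewrite fmulg1 -surjective_pairing.
have E2 : ev (fun w => psi (fmul fone w.1, w.2)) (D a fone) = ev psi (D a fone).
  by apply: ev_ext => w; rewrite fmul1g -surjective_pairing.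
rewrite E1 E2 => e; apply: (addrI (ev psi (D a fone))).
by rewrite addr0 -e.
Qed.

Lemma D1l psi c : ev psi (D fone c) = 0.
Proof.
have := evL1 psi fone fone c; rewrite fmul1g.
have E1 : ev (fun w => psi (fmul w.1 fone, w.2)) (D fone c) = ev psi (D fone c).
  by apply: ev_ext => w; rewrite fmulg1 -surjective_pairing.
have E2 : ev (fun w => psi (w.1, fmul fone w.2)) (D fone c) = ev psi (D fone c).
  by apply: ev_ext => w; rewrite fmul1g -surjective_pairing.
rewrite E1 E2 => e; apply: (addrI (ev psi (D fone c))).
by rewrite addr0 -e.
Qed.

Lemma DV_invS a y Y l : fmul Y y = fone -> fmul y Y = fone -> DV a y l -> DV a Y (invS Y l).
Proof.
move=> e1 e2 H psi.
have := evL2 (fun w => psi (fmul Y w.1, w.2)) a y Y; rewrite e2 D1r.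
have E : ev (fun w => psi (fmul Y (fmul y w.1), w.2)) (D a Y) = ev psi (D a Y).
  by apply: ev_ext => w; rewrite fmulA e1 fmul1g -surjective_pairing.
rewrite /= E => e.
rewrite /invS (ev_embR_mapN _ (fun t => (fmul Y t.1, fmul t.2 Y))) -H.
by apply: (addrI (ev (fun w : FG * FG => psi (fmul Y w.1, fmul w.2 Y)) (D a y))); rewrite addrN -e.
Qed.

Lemma DV_invF x X c l : fmul X x = fone -> fmul x X = fone -> DV x c l -> DV X c (invF X l).
Proof.
move=> e1 e2 H psi.
have := evL1 (fun w => psi (w.1, fmul X w.2)) x X c; rewrite e2 D1l.
have E : ev (fun w => psi (w.1, fmul X (fmul x w.2))) (D X c) = ev psi (D X c).
  by apply: ev_ext => w; rewrite fmulA e1 fmul1g -surjective_pairing.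
rewrite /= E => e.
rewrite /invF (ev_embR_mapN _ (fun t => (fmul t.1 X, fmul X t.2))) -H.
by apply: (addrI (ev (fun w : FG * FG => psi (fmul w.1 X, fmul X w.2)) (D x c))); rewrite addrN -e.
Qed.

Lemma DV_leib2 a b c l1 l2 : DV a b l1 -> DV a c l2 -> DV a (fmul b c) (leib2 b c l1 l2).
Proof.
move=> H1 H2 psi; rewrite evL2 H1 H2 /leib2 ev_embR_cat.
rewrite (ev_embR_map _ (fun t => (t.1, fmul t.2 c))).
by rewrite (ev_embR_map _ (fun t => (fmul b t.1, t.2))).
Qed.

Lemma DV_leib1 a b c l1 l2 : DV a c l1 -> DV b c l2 -> DV (fmul a b) c (leib1 a b l1 l2).
Proof.
move=> H1 H2 psi; rewrite evL1 H1 H2 /leib1 ev_embR_cat.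
rewrite (ev_embR_map _ (fun t => (fmul t.1 b, t.2))).
by rewrite (ev_embR_map _ (fun t => (t.1, fmul a t.2))).
Qed.

Lemma DV_base : [/\ DV fu fu d00, DV fu fv d01, DV fv fu d10 & DV fv fv d11].
Proof.
case: HD => Huv Hvu Huu Hvv _; split => psi; rewrite ?(evAA_eq _ Huv) ?(evAA_eq _ Hvu)
  ?(evAA_eq _ Huu) ?(evAA_eq _ Hvv) ?ev_embR ?big_nil ?ev_nil //.
rewrite ev_scaleAA ev_tens /d01 big_cons big_nil addr0 /=.
by rewrite (_ : (-1)%:~R = -1 :> CC) // rmorphN1.
Qed.

Lemma DV_all i j : DV (gen i) (gen j) (Dl i j).
Proof.
have [B00 B01 B10 B11] := DV_base.
have H02 : DV fu (finv fu) d02 by apply: DV_invS fmul_Uu fmul_uU B00.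
have H03 : DV fu (finv fv) d03 by apply: DV_invS fmul_Vv fmul_vV B01.
have H12 : DV fv (finv fu) d12 by apply: DV_invS fmul_Uu fmul_uU B10.
have H13 : DV fv (finv fv) d13 by apply: DV_invS fmul_Vv fmul_vV B11.
have H20 : DV (finv fu) fu d20 by apply: DV_invF fmul_Uu fmul_uU B00.
have H21 : DV (finv fu) fv d21 by apply: DV_invF fmul_Uu fmul_uU B01.
have H30 : DV (finv fv) fu d30 by apply: DV_invF fmul_Vv fmul_vV B10.
have H31 : DV (finv fv) fv d31 by apply: DV_invF fmul_Vv fmul_vV B11.
have H22 : DV (finv fu) (finv fu) d22 by apply: DV_invS fmul_Uu fmul_uU H20.
have H23 : DV (finv fu) (finv fv) d23 by apply: DV_invS fmul_Vv fmul_vV H21.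
have H32 : DV (finv fv) (finv fu) d32 by apply: DV_invS fmul_Uu fmul_uU H30.
have H33 : DV (finv fv) (finv fv) d33 by apply: DV_invS fmul_Vv fmul_vV H31.
have H04 := DV_leib2 H02 H03.
have H14 := DV_leib2 H12 H13.
have H24 := DV_leib2 H22 H23.
have H34 := DV_leib2 H32 H33.
have H40 := DV_leib1 H20 H30.
have H41 := DV_leib1 H21 H31.
have H42 := DV_leib1 H22 H32.
have H43 := DV_leib1 H23 H33.
have H44 := DV_leib1 H24 H34.
by case: i => [|[|[|[|i]]]]; case: j => [|[|[|[|j]]]].
Qed.
End WithD.

Section Refl.
Variable T : eqType.
Definition coefZ (l : seq (int * T)) (g : T) : int :=
  foldr (fun p acc => if p.2 == g then p.1 + acc else acc) 0 l.
Definition eqZb (l1 l2 : seq (int * T)) : bool :=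
  all (fun t => coefZ l1 t == coefZ l2 t) (map snd l1 ++ map snd l2).

Lemma coefL_embR l g : coefL (embR l) g = (coefZ l g)%:~R.
Proof.
elim: l => [|p l IH]; first by rewrite /coefL big_nil.
rewrite /coefL /= big_cons -/(coefL _ g) IH /=.
by case: ifP => _; rewrite ?rmorphD.
Qed.

Lemma coefZ_out l g : g \notin map snd l -> coefZ l g = 0.
Proof.
elim: l => [|p l IH] //=; rewrite inE negb_or => /andP[ne /IH ->].
by rewrite eq_sym (negbTE ne).
Qed.

Lemma eqZbP l1 l2 : eqZb l1 l2 -> forall phi, ev phi (embR l1) = ev phi (embR l2).
Proof.
move=> /allP H phi; apply: ev_eq => g; rewrite !coefL_embR.
case: (boolP (g \in map snd l1 ++ map snd l2)) => [/H /eqP -> //|].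
rewrite mem_cat negb_or => /andP[n1 n2].
by rewrite !coefZ_out.
Qed.
End Refl.

Lemma ev_embR_allpairs (T : eqType) (F : nat -> nat -> seq (int * T)) r1 r2 phi :
  ev phi (embR (flatten [seq F i j | i <- r1, j <- r2])) =
  \sum_(i <- r1) \sum_(j <- r2) ev phi (embR (F i j)).
Proof.
rewrite ev_embR big_flatten big_allpairs_dep; apply: eq_bigr => i _.
by apply: eq_bigr => j _; rewrite ev_embR.
Qed.

Lemma ev_embR_allpairs2 (T : eqType) (S1 S2 : Type) (c : int) (f : S1 -> S2 -> T)
  (r1 : seq S1) (r2 : seq S2) phi :
  ev phi (embR [seq (c, f i j) | i <- r1, j <- r2]) =
  \sum_(i <- r1) \sum_(j <- r2) c%:~R * phi (f i j).
Proof. by rewrite ev_embR big_allpairs_dep. Qed.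

Definition muZ (l : seq (int * (FG * FG))) := [seq (p.1, fmul p.2.1 p.2.2) | p <- l].
Definition BIG := flatten [seq muZ (Dl i j) | i <- iota 0 5, j <- iota 0 5].
Definition sgen : seq FG := [:: fv; finv fu].
Definition RR : seq (int * FG) :=
  [seq (1%Z, fmul (gen i) s) | i <- iota 0 5, s <- sgen] ++
  [seq ((-1)%Z, fmul s (gen i)) | s <- sgen, i <- iota 0 5].

Lemma BIG_RR : eqZb BIG RR.
Proof. by vm_compute. Qed.

Lemma ev_hK psi : ev psi hK = \sum_(i <- iota 0 5) psi (gen i).
Proof.
by rewrite /ev /hK (_ : iota 0 5 = [:: 0; 1; 2; 3; 4]%N) // !big_cons !big_nil !mul1r.
Qed.

Lemma ev_SK psi : ev psi SK = \sum_(s <- sgen) psi s.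
Proof. by rewrite /ev /SK /sgen !big_cons !big_nil !mul1r. Qed.

Lemma BASE D : is_Kontsevich_dbr D -> forall phi,
  ev phi (brK D hK hK) = ev phi (mulA hK SK) - ev phi (mulA SK hK).
Proof.
move=> HD phi.
rewrite ev_brK ev_hK.
under eq_bigr => i _ do rewrite ev_hK.
transitivity (ev phi (embR BIG)).
  rewrite /BIG ev_embR_allpairs; apply: eq_bigr => i _; apply: eq_bigr => j _.
  by rewrite /muZ (ev_embR_map _ (fun t => fmul t.1 t.2)) /evm (DV_all HD).
rewrite (eqZbP BIG_RR) /RR ev_embR_cat !ev_embR_allpairs2 !ev_mulA ev_hK ev_SK.
under [X in _ = _ - X]eq_bigr => s _ do rewrite ev_hK.
under [X in _ = X - _]eq_bigr => i _ do rewrite ev_SK.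
congr (_ + _).
  by apply: eq_bigr => i _; apply: eq_bigr => s _; rewrite mul1r.
rewrite -sumrN; apply: eq_bigr => s _; rewrite -sumrN; apply: eq_bigr => i _.
by rewrite (_ : (-1)%:~R = -1 :> CC) ?mulN1r // rmorphN1.
Qed.

Section Main.
Variable D : FG -> FG -> AA.
Hypothesis HD : is_Kontsevich_dbr D.

Lemma ev_zero (phi : FG -> CC) : ev phi [::] = 0.
Proof. exact: ev_nil. Qed.

Lemma claim k phi :
  ev phi (brK D hK (powA hK k)) =
  ev phi (mulA (powA hK k) SK) - ev phi (mulA SK (powA hK k)).
Proof.
elim: k phi => [|k IH] phi.
  rewrite /powA /= ev_brK !ev_mulA.
  have -> : ev (fun a => ev (fun b => evm phi (D a b)) oneA) hK = 0.
    transitivity (ev (fun _ => 0) hK); last by rewrite /ev big1 // => p _; rewrite mulr0.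
    apply: ev_ext => a; rewrite /oneA ev_cons ev_nil addr0 mul1r /evm.
    by rewrite (D1r HD).
  rewrite /oneA ev_cons ev_nil addr0 mul1r.
  by rewrite subrr.
rewrite [powA _ _.+1]/= -/(powA hK k).
set P := powA hK k.
rewrite ev_brK_der // ev_mulA (BASE HD).
have T1 : ev (fun a => ev (fun b => phi (fmul a b)) P) (mulA hK SK) =
   ev phi (mulA hK (mulA SK P)) by rewrite -ev_mulA ev_mulA3l ev_mulA3r.
have T3 : ev phi (mulA hK (brK D hK P)) =
   ev phi (mulA hK (mulA P SK)) - ev phi (mulA hK (mulA SK P)).
  rewrite !ev_mulA -ev_subf; apply: ev_ext => a; exact: IH.
rewrite T1 T3 -ev_mulA !ev_mulA3l !ev_mulA3r.
by rewrite addrC addrA subrK.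
Qed.

End Main.

Unset Implicit Arguments.

Theorem mainTheorem3 (D : FG -> FG -> AA) :
  is_Kontsevich_dbr D ->
  forall k : nat, (0 < k)%N -> in_commA (brK D hK (powA hK k)).
Proof.
move=> HD k _.
exists [:: ((1, powA hK k), SK)] => g.
rewrite !coefA_ev (claim HD) /= cats0 ev_scaleA mul1r ev_subA.
by [].
Qed.
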